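(* Let $N\ge 1$, $L\ge 1$, $M\ge 2$ be integers and let $\omega>0$, $\eta>0$. Let $\mathcal{C}_1,\dots,\mathcal{C}_L\in\mathbb{R}^{r_1\times\cdots\times r_{N+1}}$ be core tensors and, for each $d=1,\dots,N+1$, let $f_{\theta_d}:\mathbb{R}\to\mathbb{R}^{r_d}$ be a fully-connected neural network of depth $M$ with sine activation, i.e. $$f_{\theta_d}(x)=\mathbf{W}^{d}_M\,\sigma\big(\mathbf{W}^{d}_{M-1}\,\sigma(\cdots\sigma(\mathbf{W}^{d}_1 x)\cdots)\big),$$ where $\mathbf{W}^d_1\in\mathbb{R}^{m^d_1\times 1}$, $\mathbf{W}^d_k\in\mathbb{R}^{m^d_k\times m^d_{k-1}}$, $\mathbf{W}^d_M\in\mathbb{R}^{r_d\times m^d_{M-1}}$, and $\sigma(t)=\sin(\omega t)$ is applied entrywise. Assume $\|\mathcal{C}_l\|_{\ell_1}\le\eta$ for all $l$ and $\|\mathbf{W}^d_k\|_{\ell_1}\le\eta$ for all $d,k$. For $l=1,\dots,L$ define $s_l:\mathbb{R}^{N+1}\to\mathbb{R}$ by $$s_l(\mathbf{v})=\mathcal{C}_l\times_1 f_{\theta_1}(\mathbf{v}_{(1)})\times_2\cdots\times_{N+1} f_{\theta_{N+1}}(\mathbf{v}_{(N+1)}).$$ Then for any $l_1,l_2\in\{1,\dots,L\}$, any $d\in\{1,\dots,N+1\}$, and any real numbers $v_1,\dots,v_{d-1},v_d',v_d'',v_{d+1},\dots,v_{N+1}$, $$|s_{l_1}(v_1,\dots,v_{d-1},v_d',v_{d+1},\dots,v_{N+1})-s_{l_2}(v_1,\dots,v_{d-1},v_d'',v_{d+1},\dots,v_{N+1})|\le\delta_1|v_d'-v_d''|+\delta_2,$$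 where $\xi=\max\{|v_1|,\dots,|v_{d-1}|,|v_d'|,|v_d''|,|v_{d+1}|,\dots,|v_{N+1}|\}$, $\delta_1=\eta^{MN+M+1}\omega^{(M-1)(N+1)}\xi^{N}$ and $\delta_2=2\eta^{MN+M+1}\omega^{(M-1)(N+1)}\xi^{N+1}$. Moreover, when $l_1=l_2$ the bound holds with $\delta_2$ removed, i.e. the left-hand side is at most $\delta_1|v_d'-v_d''|$.
   Context: For a vector $\mathbf{v}$, $\mathbf{v}_{(d)}$ denotes its $d$-th entry. The $\ell_1$-norm of a tensor or matrix is the sum of absolute values of all its entries: $\|\mathcal{X}\|_{\ell_1}=\sum_{i_1,\dots,i_K}|\mathcal{X}_{(i_1,\dots,i_K)}|$. For $\mathcal{X}\in\mathbb{R}^{n_1\times\cdots\times n_K}$, $\mathbf{X}^{(d)}=\mathrm{unfold}_d(\mathcal{X})\in\mathbb{R}^{n_d\times\prod_{j\ne d}n_j}$ is the mode-$d$ unfolding and $\mathrm{fold}_d$ its inverse; the mode-$d$ product with $\mathbf{A}\in\mathbb{R}^{m\times n_d}$ is $\mathcal{X}\times_d\mathbf{A}=\mathrm{fold}_d(\mathbf{A}\mathbf{X}^{(d)})$. A vector $\mathbf{a}\in\mathbb{R}^{r_d}$ used in a mode-$d$ product is treated as the $1\times r_d$ matrix $\mathbf{a}^\top$, so that $\mathcal{C}_l\times_1 f_{\theta_1}(\cdot)\times_2\cdots\times_{N+1}f_{\theta_{N+1}}(\cdot)$ is a scalar. *)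

(* Defs.v *)
From HB Require Import structures.
From mathcomp Require Import all_boot all_order all_algebra.
From mathcomp Require Import all_classical all_reals all_analysis.
Set Implicit Arguments. Unset Strict Implicit. Unset Printing Implicit Defensive.
Import Order.TTheory GRing.Theory Num.Theory.
Local Open Scope ring_scope.

Section Defs.
Variable R : realType.

Definition sin_act (omega t : R) : R := sin (omega * t).

Definition mx_l1 m n (A : 'M[R]_(m, n)) : R := \sum_(i < m) \sum_(j < n) `|A i j|.

(* Layer sizes: sz 0 (= 1, the input), sz 1 = m_1, ..., sz M = r (output).
   Weights (0-indexed): W k : 'M_(sz k.+1, sz k), i.e. W k is the paper's W_{k+1}. *)
Fixpoint sinnet_hidden (sz : nat -> nat) (W : forall k : nat, 'M[R]_(sz k.+1, sz k))
  (omega x : R) (k : nat) : 'cV[R]_(sz k) :=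
  match k with
  | 0 => const_mx x
  | k'.+1 => map_mx (sin_act omega) (W k' *m sinnet_hidden W omega x k')
  end.

(* output dimension of the network (= sz M when M >= 1) *)
Definition out_dim (sz : nat -> nat) (M : nat) : nat := sz M.-1.+1.

Definition sinnet (sz : nat -> nat) (W : forall k : nat, 'M[R]_(sz k.+1, sz k))
  (omega : R) (M : nat) (x : R) : 'cV[R]_(out_dim sz M) :=
  W M.-1 *m sinnet_hidden W omega x M.-1.

Definition midx K (r : 'I_K -> nat) := {dffun forall d : 'I_K, 'I_(r d)}.

Definition tensor_l1 K (r : 'I_K -> nat) (C : midx r -> R) : R :=
  \sum_(i : midx r) `|C i|.

(* full contraction C x_1 u_1^T x_2 ... x_K u_K^T (mode products with vectors) *)
Definition tensor_contract K (r : 'I_K -> nat) (C : midx r -> R)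
  (u : forall d : 'I_K, 'cV[R]_(r d)) : R :=
  \sum_(i : midx r) C i * \prod_(d < K) u d (i d) 0.

Definition upd_coord K (v : 'I_K -> R) (d : 'I_K) (a : R) : 'I_K -> R :=
  fun j => if j == d then a else v j.

Definition xi_of K (v : 'I_K -> R) (d : 'I_K) (a b : R) : R :=
  Num.max (Num.max `|a| `|b|) (\big[Num.max/0]_(j < K | j != d) `|v j|).

End Defs.

(* Main.v *)
Require Import Defs.
From HB Require Import structures.
From mathcomp Require Import all_boot all_order all_algebra.
From mathcomp Require Import all_classical all_reals all_analysis.
From mathcomp Require Import zify ring.
Import Order.TTheory GRing.Theory Num.Theory.
Import numFieldNormedType.Exports.
Set Implicit Arguments. Unset Strict Implicit.
Local Open Scope ring_scope.
Local Open Scope classical_set_scope.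

Lemma sin_lip (R : realType) (s t : R) : `|sin s - sin t| <= `|s - t|.
Proof.
wlog st : s t / t <= s.
  move=> H; case: (leP t s) => [/H//|/ltW/H]; by rewrite distrC [`|s - t|]distrC.
have h1 : forall x, x \in `]t, s[%R -> is_derive x 1 (@sin R) (cos x).
  by move=> x _; exact: is_derive_sin.
case: (@MVT_segment R sin cos t s st h1).
  exact/continuous_subspaceT/continuous_sin.
move=> c _ ->.
by rewrite normrM ler_piMl // cos_max.
Qed.

Section H.
Variable R : realType.

Definition vl1 n (u : 'cV[R]_n) : R := \sum_(i < n) `|u i 0|.

Lemma vl1_ge0 n (u : 'cV[R]_n) : 0 <= vl1 u.
Proof. by apply: sumr_ge0 => i _. Qed.

Lemma entry_le_vl1 n (u : 'cV[R]_n) i : `|u i 0| <= vl1 u.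
Proof.
rewrite /vl1 (bigD1 i) //= lerDl; by apply: sumr_ge0 => j _.
Qed.

Lemma vl1_mul m n (A : 'M[R]_(m, n)) u : vl1 (A *m u) <= mx_l1 A * vl1 u.
Proof.
rewrite /vl1 /mx_l1 mulr_suml; apply: ler_sum => i _; rewrite mxE.
apply: (le_trans (ler_norm_sum _ _ _)); rewrite mulr_suml.
apply: ler_sum => j _; rewrite normrM; apply: ler_wpM2l => //.
exact: (entry_le_vl1 u).
Qed.

Lemma vl1_sin (omega : R) n (w w' : 'cV[R]_n) : 0 <= omega ->
  vl1 (map_mx (sin_act omega) w - map_mx (sin_act omega) w') <= omega * vl1 (w - w').
Proof.
move=> om; rewrite /vl1 mulr_sumr; apply: ler_sum => i _; rewrite !mxE /sin_act.
apply: (le_trans (sin_lip _ _)); by rewrite -mulrBr normrM ger0_norm.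
Qed.

Lemma hidden0 sz (W : forall k : nat, 'M[R]_(sz k.+1, sz k)) omega k :
  sinnet_hidden W omega 0 k = 0.
Proof.
elim: k => [|k IH] /=; apply/matrixP => i j; rewrite !mxE //.
rewrite /sin_act IH big1 ?mulr0 ?sin0 // => j0 _; by rewrite mxE mulr0.
Qed.

Lemma hidden_lip sz (W : forall k : nat, 'M[R]_(sz k.+1, sz k)) omega eta M x y k :
  sz 0%N = 1%N -> 0 <= omega -> (forall k, (k < M)%N -> mx_l1 (W k) <= eta) ->
  (k <= M)%N ->
  vl1 (sinnet_hidden W omega x k - sinnet_hidden W omega y k) <= (omega * eta) ^+ k * `|x - y|.
Proof.
move=> sz0 om HW; elim: k => [|k IH] Hk /=.
  rewrite /vl1 expr0 mul1r.
  under eq_bigr do rewrite !mxE.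
  by rewrite sumr_const card_ord sz0.
apply: (le_trans (vl1_sin _ _ om)); rewrite -mulmxBr.
have e0 : 0 <= eta by apply: le_trans (HW k Hk); apply: sumr_ge0 => i _; apply: sumr_ge0.
apply: (le_trans (ler_wpM2l om (vl1_mul _ _))).
rewrite exprSr -!mulrA [X in _ <= X]mulrCA ler_wpM2l //.
apply: (le_trans (ler_wpM2r (vl1_ge0 _) (HW k Hk))).
by rewrite [X in _ <= X]mulrCA ler_wpM2l // IH // ltnW.
Qed.

Lemma net_lip sz (W : forall k : nat, 'M[R]_(sz k.+1, sz k)) omega eta M x y :
  sz 0%N = 1%N -> 0 <= omega -> (forall k, (k < M)%N -> mx_l1 (W k) <= eta) ->
  (1 <= M)%N ->
  vl1 (sinnet W omega M x - sinnet W omega M y) <= eta * (omega * eta) ^+ M.-1 * `|x - y|.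
Proof.
move=> sz0 om HW HM; rewrite /sinnet -mulmxBr.
have HM1 : (M.-1 < M)%N by case: (M) HM.
have e0 : 0 <= eta by apply: le_trans (HW _ HM1); apply: sumr_ge0 => i _; apply: sumr_ge0.
apply: (le_trans (vl1_mul _ _)); rewrite -mulrA.
apply: (le_trans (ler_wpM2r (vl1_ge0 _) (HW _ HM1))).
by rewrite ler_wpM2l // (@hidden_lip _ _ _ _ _ _ _ _ sz0 om HW) // ltnW.
Qed.

Lemma net_bound sz (W : forall k : nat, 'M[R]_(sz k.+1, sz k)) omega eta M x :
  sz 0%N = 1%N -> 0 <= omega -> (forall k, (k < M)%N -> mx_l1 (W k) <= eta) ->
  (1 <= M)%N ->
  vl1 (sinnet W omega M x) <= eta * (omega * eta) ^+ M.-1 * `|x|.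
Proof.
move=> sz0 om HW HM; have := net_lip x 0 sz0 om HW HM.
by rewrite subr0 /sinnet hidden0 mulmx0 subr0.
Qed.

Lemma tc_bound K (r : 'I_K -> nat) (C : midx r -> R) (u : forall d, 'cV[R]_(r d)) :
  `|tensor_contract C u| <= tensor_l1 C * \prod_(d < K) vl1 (u d).
Proof.
rewrite /tensor_contract /tensor_l1 mulr_suml.
apply: (le_trans (ler_norm_sum _ _ _)); apply: ler_sum => i _.
rewrite normrM ler_wpM2l // normr_prod; apply: ler_prod => e _.
by rewrite normr_ge0 entry_le_vl1.
Qed.

Lemma tc_diff K (r : 'I_K -> nat) (C : midx r -> R) (u u' : forall d, 'cV[R]_(r d)) d :
  (forall e, e != d -> u e = u' e) ->
  `|tensor_contract C u - tensor_contract C u'| <=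
    tensor_l1 C * (vl1 (u d - u' d) * \prod_(e < K | e != d) vl1 (u e)).
Proof.
move=> H; rewrite /tensor_contract /tensor_l1 -sumrB mulr_suml.
apply: (le_trans (ler_norm_sum _ _ _)); apply: ler_sum => i _.
rewrite -mulrBr normrM ler_wpM2l // (bigD1 d) //= [X in _ - X](bigD1 d) //=.
have -> : \prod_(e < K | e != d) u' e (i e) 0 = \prod_(e < K | e != d) u e (i e) 0.
  by apply: eq_bigr => e /H ->.
rewrite -mulrBl normrM; apply: ler_pM => //.
  by have := entry_le_vl1 (u d - u' d) (i d); rewrite !mxE.
rewrite normr_prod; apply: ler_prod => e _.
by rewrite normr_ge0 entry_le_vl1.
Qed.

End H.

Lemma aux_eq (R : comRingType) (e K x y : R) N :
  e * (K ^+ N * K) * x ^+ N * y = e * (K * y * (K ^+ N * x ^+ N)).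
Proof. ring. Qed.

Theorem lemma3 (R : realType) (N L M : nat) (omega eta : R)
  (sz : 'I_N.+1 -> nat -> nat)
  (W : forall (d : 'I_N.+1) (k : nat), 'M[R]_(sz d k.+1, sz d k))
  (C : 'I_L -> midx (fun d : 'I_N.+1 => out_dim (sz d) M) -> R) :
  (1 <= N)%N -> (1 <= L)%N -> (2 <= M)%N -> 0 < omega -> 0 < eta ->
  (forall d, sz d 0%N = 1%N) ->
  (forall l, tensor_l1 (C l) <= eta) ->
  (forall d (k : nat), (k < M)%N -> mx_l1 (W d k) <= eta) ->
  let s := fun (l : 'I_L) (v : 'I_N.+1 -> R) =>
    tensor_contract (C l) (fun d => sinnet (W d) omega M (v d)) in
  forall (l1 l2 : 'I_L) (d : 'I_N.+1) (v : 'I_N.+1 -> R) (a b : R),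
  let xi := xi_of v d a b in
  let delta1 := eta ^+ (M * N + M + 1) * omega ^+ ((M - 1) * (N + 1)) * xi ^+ N in
  let delta2 := 2 * eta ^+ (M * N + M + 1) * omega ^+ ((M - 1) * (N + 1)) * xi ^+ (N + 1) in
  `|s l1 (upd_coord v d a) - s l2 (upd_coord v d b)| <= delta1 * `|a - b| + delta2 /\
  (l1 = l2 -> `|s l1 (upd_coord v d a) - s l2 (upd_coord v d b)| <= delta1 * `|a - b|).

Proof.
move=> N1 L1 M2 om e0 sz0 HC HW s l1 l2 d v a b xi delta1 delta2.
have om0 : 0 <= omega by apply: ltW.
have eta0 : 0 <= eta by apply: ltW.
have M1 : (1 <= M)%N by apply: leq_trans M2.
set K := eta * (omega * eta) ^+ M.-1.
have K0 : 0 <= K by rewrite mulr_ge0 // exprn_ge0 // mulr_ge0.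
have Hab : Num.max `|a| `|b| <= xi by rewrite /xi /xi_of le_max lexx.
have xi0 : 0 <= xi by apply: le_trans Hab; rewrite le_max normr_ge0.
have Hupd : forall c, `|c| <= xi -> forall e, `|upd_coord v d c e| <= xi.
  move=> c Hc e; rewrite /upd_coord; case: eqP => // /eqP ne.
  rewrite /xi /xi_of le_max; apply/orP; right.
  rewrite (bigD1 e) //= /Order.max; case: ifP => [/ltW|_] //.
have Ha : `|a| <= xi by apply: le_trans Hab; rewrite le_max lexx.
have Hb : `|b| <= xi by apply: le_trans Hab; rewrite le_max lexx orbT.
have Hf : forall x, `|x| <= xi -> forall e, vl1 (sinnet (W e) omega M x) <= K * xi.
  move=> x Hx e; apply: le_trans (net_bound x (sz0 e) om0 (HW e) M1) _.
  by rewrite ler_wpM2l.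
have Hs : forall l c, `|c| <= xi -> `|s l (upd_coord v d c)| <= eta * (K * xi) ^+ (N + 1).
  move=> l c Hc; apply: le_trans (tc_bound (C l) _) _.
  apply: ler_pM => //; first by apply: sumr_ge0 => i _.
    by apply: prodr_ge0 => e _; apply: vl1_ge0.
  have -> : (K * xi) ^+ (N + 1) = \prod_(e < N.+1) (K * xi).
    by rewrite prodr_const card_ord addn1.
  by apply: ler_prod => e _; rewrite vl1_ge0 Hf // Hupd.
have E : eta ^+ (M * N + M + 1) * omega ^+ ((M - 1) * (N + 1)) = eta * K ^+ (N + 1).
  rewrite /K exprMn -exprM exprMn.
  have -> : (M - 1 = M.-1)%N by rewrite subn1.
  have -> : (M * N + M + 1 = 1 + (N + 1) + M.-1 * (N + 1))%N.
    by case: (M) M1 => // m _ /=; lia.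
  rewrite !exprD expr1; ring.
have D1 : delta1 = eta * K ^+ (N + 1) * xi ^+ N by rewrite /delta1 E.
have D2 : delta2 = 2 * (eta * (K * xi) ^+ (N + 1)).
  by rewrite /delta2 -[2 * _ * _]mulrA E [(K * xi) ^+ _]exprMn !mulrA.
have d1ge0 : 0 <= delta1 by rewrite D1 !mulr_ge0 // exprn_ge0.
split.
  apply: (@le_trans _ _ delta2); last by rewrite ?lerDl ?lerDr mulr_ge0.
  rewrite D2 mulr2n mulrDl mul1r.
  by apply: le_trans (ler_normB _ _) _; apply: lerD; apply: Hs.
move=> <-.
apply: le_trans (tc_diff (C l1) (d:=d) _) _.
  by move=> e ne; rewrite /upd_coord (negbTE ne).
have Hd : forall c, upd_coord v d c d = c by move=> c; rewrite /upd_coord eqxx.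
rewrite !Hd D1.
have P1 := net_lip a b (sz0 d) om0 (HW d) M1.
have P2 : \prod_(e < N.+1 | e != d) vl1 (sinnet (W e) omega M (upd_coord v d a e)) <= (K * xi) ^+ N.
  have -> : (K * xi) ^+ N = \prod_(e < N.+1 | e != d) (K * xi).
    by rewrite prodr_const cardC1 card_ord.
  by apply: ler_prod => e _; rewrite vl1_ge0 Hf // Hupd.
apply: le_trans.
  apply: ler_pM (HC l1) (ler_pM _ _ P1 P2) => //.
  - by apply: sumr_ge0.
  - by apply: mulr_ge0; [apply: vl1_ge0 | apply: prodr_ge0 => e _; apply: vl1_ge0].
  - exact: vl1_ge0.
  - by apply: prodr_ge0 => e _; apply: vl1_ge0.
rewrite [(K * xi) ^+ N]exprMn addn1 [K ^+ N.+1]exprSr.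
by rewrite -/K aux_eq.
Qed.
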